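(* Let $\mathcal{M}=(\mathbf{x},\mathbf{p})$ be an auction format satisfying voluntary participation, let $\boldsymbol{\pi}^{(1)},\dots,\boldsymbol{\pi}^{(n)}\in\Delta([K+1])$ be quantile strategies with $s_i:=s_{i,\boldsymbol{\pi}^{(i)}}$, and let $\tilde{\mathcal{M}}$ be the associated auxiliary auction. Let $\mathbf{e}:=(1,0,\dots,0)\in\mathbb{R}^{K+1}$. For $\mathbf{v}\sim\mathcal{D}$, set $\mathbf{b}_{-i}:=(s_\ell(v_\ell))_{\ell\neq i}$. Then \[ \sum_{i\in[n]}\mathbb{E}_{\mathbf{v}_{-i}}\Big[\mathbf{g}_i(\boldsymbol{\pi}^{(i)};\mathbf{b}_{-i})^{\top}\big(\mathbf{e}-\boldsymbol{\pi}^{(i)}\big)\Big]=\mathbb{E}_{\mathbf{v}\sim\mathcal{D}}\Big[\sum_{i\in[n]}p_i\big(s_1(v_1),\dots,s_n(v_n)\big)\Big]-\mathrm{Rev}_{\tilde{\mathcal{M}}}(\mathcal{D}). \]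
   Context: Each bidder $i\in[n]$ has value $v_i$ drawn independently from a continuous distribution $\mathcal{D}_i$ on $[0,1]$ with CDF $F_i$ and quantile function $F_i^{-1}(y):=\inf\{v\in[0,1]:F_i(v)\ge y\}$; $\mathcal{D}:=\mathcal{D}_1\times\cdots\times\mathcal{D}_n$. Bid set $B:=\{j/K:j=0,\dots,K\}$. An auction format is $(\mathbf{x},\mathbf{p})$, $\mathbf{x}:B^n\to\Delta([n])$ (nonnegative entries summing to at most 1), $\mathbf{p}:B^n\to[0,1]^n$; voluntary participation means $p_i(0,\mathbf{b}_{-i})=0$ for all $i$ and $\mathbf{b}_{-i}\in B^{n-1}$. For $\boldsymbol{\pi}\in\Delta([K+1])$ (probability simplex), $\Pi_0:=0$, $\Pi_j:=\sum_{\ell\le j}\pi_\ell$; $s_{i,\boldsymbol{\pi}}$ bids $0$ on $[0,F_i^{-1}(\Pi_1)]$ and $\frac{j-1}{K}$ on $(F_i^{-1}(\Pi_{j-1}),F_i^{-1}(\Pi_j)]$ for $j=2,\dots,K+1$. For $\mathbf{b}_{-i}\in B^{n-1}$, the vector $\mathbf{g}_i(\boldsymbol{\pi};\mathbf{b}_{-i})\in\mathbb{R}^{K+1}$ (the gradient of bidder $i$'s quantile utility) has entries \[ g_{i,k}(\boldsymbol{\pi};\mathbf{b}_{-i}):=\sum_{j=k}^{K}\Big(x_i\big(\tfrac{j-1}{K},\mathbf{b}_{-i}\big)-x_i\big(\tfrac{j}{K},\mathbf{b}_{-i}\big)\Big)F_i^{-1}(\Pi_j)+x_i(1,\mathbf{b}_{-i})-p_i\big(\tfrac{k-1}{K},\mathbf{b}_{-i}\big),\quad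 k\in[K+1]. \] The auxiliary auction $\tilde{\mathcal{M}}=(\tilde{\mathbf{x}},\tilde{\mathbf{p}})$ on $[0,1]^n$: $\tilde{\mathbf{x}}(\mathbf{v}):=\mathbf{x}(s_1(v_1),\dots,s_n(v_n))$, $\tilde p_i(\mathbf{v}):=\tilde x_i(v_i,\mathbf{v}_{-i})v_i-\int_0^{v_i}\tilde x_i(z,\mathbf{v}_{-i})dz$; $\mathrm{Rev}_{\tilde{\mathcal{M}}}(\mathcal{D}):=\mathbb{E}_{\mathbf{v}\sim\mathcal{D}}[\sum_i\tilde p_i(\mathbf{v})]$. *)

(* Defs.v *)
From mathcomp Require Import all_boot all_order all_algebra all_classical all_reals all_analysis.
Set Implicit Arguments. Unset Strict Implicit. Unset Printing Implicit Defensive.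
Import Order.TTheory GRing.Theory Num.Theory numFieldNormedType.Exports.
Local Open Scope classical_set_scope.
Local Open Scope ring_scope.

(* Bids are represented by their index j : 'I_K.+1, standing for the bid j/K
   in B = {0, 1/K, ..., 1}. *)

Section Auction.
Variables (R : realType) (n K : nat).

Definition bid_value (j : 'I_K.+1) : R := j%:R / K%:R.

Definition upd (b : 'I_n -> 'I_K.+1) (i : 'I_n) (k : 'I_K.+1) : 'I_n -> 'I_K.+1 :=
  fun l => if l == i then k else b l.

Definition updR (v : 'I_n -> R) (i : 'I_n) (z : R) : 'I_n -> R :=
  fun l => if l == i then z else v l.

Definition alloc_ok (x : ('I_n -> 'I_K.+1) -> 'I_n -> R) : Prop :=
  forall b, (forall i, 0 <= x b i) /\ \sum_(i < n) x b i <= 1.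

Definition pay_ok (p : ('I_n -> 'I_K.+1) -> 'I_n -> R) : Prop :=
  forall b i, 0 <= p b i <= 1.

Definition voluntary_participation (p : ('I_n -> 'I_K.+1) -> 'I_n -> R) : Prop :=
  forall b i, p (upd b i ord0) i = 0.

(* pi in the probability simplex Delta([K+1]); entry pi_j (1-based) is pi (j-1) *)
Definition in_simplex (pi : 'I_K.+1 -> R) : Prop :=
  (forall j, 0 <= pi j) /\ \sum_(j < K.+1) pi j = 1.

(* Pi_j = sum_{l <= j} pi_l  (1-based j), Pi_0 = 0 *)
Definition Pi (pi : 'I_K.+1 -> R) (j : nat) : R :=
  \sum_(l < K.+1 | (l < j)%N) pi l.

Definition quantile (F : R -> R) (y : R) : R :=
  inf [set v : R | 0 <= v <= 1 /\ y <= F v].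

Definition qstrat (F : R -> R) (pi : 'I_K.+1 -> R) (v : R) : 'I_K.+1 :=
  odflt ord0 [pick j : 'I_K.+1 |
     ((j == ord0) && (v <= quantile F (Pi pi 1)))
  || ((0 < j)%N && (quantile F (Pi pi j) < v)
                && (v <= quantile F (Pi pi j.+1)))].

(* gradient g_i(pi; b_{-i}); entry k (0-based) corresponds to the paper's k+1.
   The i-th component of b is ignored. *)
Definition grad (x p : ('I_n -> 'I_K.+1) -> 'I_n -> R) (F : R -> R)
  (pi : 'I_K.+1 -> R) (i : 'I_n) (b : 'I_n -> 'I_K.+1) (k : 'I_K.+1) : R :=
  \sum_(k.+1 <= j < K.+1)
     (x (upd b i (inord j.-1)) i - x (upd b i (inord j)) i)
       * quantile F (Pi pi j)
  + x (upd b i ord_max) i - p (upd b i k) i.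

Definition grad_dot (g : 'I_K.+1 -> R) (pi : 'I_K.+1 -> R) : R :=
  \sum_(k < K.+1) g k * ((k == ord0)%:R - pi k).

Definition aux_x (x : ('I_n -> 'I_K.+1) -> 'I_n -> R)
  (s : 'I_n -> R -> 'I_K.+1) (v : 'I_n -> R) (i : 'I_n) : R :=
  x (fun l => s l (v l)) i.

Definition aux_p (x : ('I_n -> 'I_K.+1) -> 'I_n -> R)
  (s : 'I_n -> R -> 'I_K.+1) (v : 'I_n -> R) (i : 'I_n) : R :=
  aux_x x s v i * v i
  - Rintegral lebesgue_measure `[0, v i]
      (fun z => aux_x x s (updR v i z) i).

End Auction.

Section Prob.
Local Open Scope ereal_scope.

Definition mutually_independent d (T : measurableType d) (R : realType)
  (P : probability T R) (n : nat) (V : 'I_n -> T -> R) : Prop :=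
  forall A : 'I_n -> set R, (forall i, measurable (A i)) ->
    P (\bigcap_(i in [set: 'I_n]) (V i @^-1` A i))
    = \prod_(i < n) P (V i @^-1` A i).

Definition cdfR d (T : measurableType d) (R : realType) (P : probability T R)
  (X : {RV P >-> R}) (r : R) : R := fine (cdf X r).

Definition aux_rev d (T : measurableType d) (R : realType) (P : probability T R)
  (n K : nat) (x : ('I_n -> 'I_K.+1) -> 'I_n -> R)
  (s : 'I_n -> R -> 'I_K.+1) (V : 'I_n -> T -> R) : \bar R :=
  'E_P[fun w => (\sum_(i < n) aux_p x s (fun l => V l w) i)%R].
End Prob.

(* Main.v *)
Require Import Defs.
From mathcomp Require Import all_boot all_order all_algebra all_classical all_reals all_analysis.
From mathcomp Require Import ring lra.
Import Order.TTheory GRing.Theory Num.Theory numFieldNormedType.Exports.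
Local Open Scope classical_set_scope.
Local Open Scope ring_scope.
Set Implicit Arguments. Unset Strict Implicit. Unset Printing Implicit Defensive.
Section Quant.
Variables (R : realType) (F : R -> R).
Hypotheses (Fc : continuous F) (F0 : F 0 = 0) (F1 : F 1 = 1).

Let Fcq (q : R) : F x @[x --> q] --> F q.
Proof. exact: Fc. Qed.

Let S (y : R) := [set v : R | 0 <= v <= 1 /\ y <= F v].

Lemma S_lb y : lbound (S y) 0.
Proof. by move=> v [/andP[]]. Qed.

Lemma S_ne y : y <= 1 -> S y !=set0.
Proof. by move=> y1; exists 1; split; rewrite ?F1 // ler01 lexx. Qed.

Lemma S_hasinf y : y <= 1 -> has_inf (S y).
Proof. by move=> y1; split; [exact: S_ne|exists 0; exact: S_lb]. Qed.

Lemma quantile_bounds y : y <= 1 -> 0 <= quantile F y <= 1.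
Proof.
move=> y1; rewrite /quantile; apply/andP; split.
  by apply: lb_le_inf; [exact: S_ne|exact: S_lb].
apply: (ge_inf (E := S y)); first by exists 0; exact: S_lb.
by split; rewrite ?F1 // ler01 lexx.
Qed.

Lemma quantile_mono y1 y2 : y1 <= y2 -> y2 <= 1 -> quantile F y1 <= quantile F y2.
Proof.
move=> y12 y21; rewrite /quantile; apply: lb_le_inf; first exact: S_ne.
move=> v [v01 Fv]; apply: (ge_inf (E := S y1)); first by exists 0; exact: S_lb.
by split => //; exact: le_trans Fv.
Qed.

Lemma quantileK y : 0 <= y <= 1 -> F (quantile F y) = y.
Proof.
move=> /andP[y0 y1]; set q := quantile F y.
have [q0 q1] : 0 <= q /\ q <= 1 by apply/andP; exact: quantile_bounds.
have lbq : lbound (S y) q by apply: ge_inf; exists 0; exact: S_lb.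
apply/eqP; rewrite eq_le; apply/andP; split; last first.
  rewrite leNgt; apply/negP => Fqy.
  have [e e0 He] := (nbhs_ballP _ _).1 (cvgr_lt _ (@Fcq q) _ Fqy).
  have [v Sv vq] := inf_adherent e0 (S_hasinf y1).
  have qv : q <= v by exact: lbq.
  have : F v < y.
    apply: (He v); rewrite /ball /= ler0_norm ?subr_le0 // opprB.
    have vq' : v < q + e := vq.
    lra.
  by case: Sv => _ /le_lt_trans H /H; rewrite ltxx.
have [->|qpos] := eqVneq q 0; first by rewrite F0.
have qgt0 : 0 < q by rewrite lt0r qpos q0.
rewrite leNgt; apply/negP => yFq.
have [e e0 He] := (nbhs_ballP _ _).1 (cvgr_gt _ (@Fcq q) _ yFq).
set m := Num.min e q.
have m0 : 0 < m by rewrite lt_min e0 qgt0.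
have me : m <= e by rewrite ge_min lexx.
have mq : m <= q by rewrite ge_min lexx orbT.
have m2 : 0 < m / 2 by rewrite divr_gt0.
have m2e : m / 2 < e by move: me m0; lra.
have m2q : m / 2 < q by move: mq m0; lra.
have : y < F (q - m / 2).
  apply: He; rewrite /ball /= opprB addrC addrNK gtr0_norm //.
move=> yF.
have : q <= q - m / 2.
  apply: lbq; split; last exact: ltW.
  apply/andP; split; lra.
lra.
Qed.
End Quant.
Section Strat.
Variables (R : realType) (K : nat) (F : R -> R) (pi : 'I_K.+1 -> R).
Local Notation qq j := (quantile F (Pi pi j)).
Hypothesis qmono : forall a b : nat, (a <= b)%N -> qq a <= qq b.

Definition spred (j : 'I_K.+1) (v : R) : bool :=
  ((j == ord0) && (v <= qq 1))
  || ((0 < j)%N && (qq j < v) && (v <= qq j.+1)).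

Lemma spredP (j : 'I_K.+1) v :
  spred j v = if (j : nat) == 0%N then v <= qq 1 else (qq j < v) && (v <= qq j.+1).
Proof.
rewrite /spred; case: j => [[|j'] Hj] /=.
  by rewrite orbF.
by [].
Qed.

Lemma spred_uniq j k v : spred j v -> spred k v -> j = k.
Proof.
wlog jk : j k / (j <= k)%N.
  move=> H; case/orP: (leq_total j k) => [/H//|kj Hj Hk]; exact/esym/(H k j).
rewrite !spredP.
case: (eqVneq (j : nat) 0%N) => [j0|jpos]; case: (eqVneq (k : nat) 0%N) => [k0|kpos].
- by move=> _ _; apply/val_inj; rewrite /= j0 k0.
- move=> v1 /andP[kv _].
  have k1 : (1 <= k)%N by rewrite lt0n.
  by have := le_lt_trans (le_trans v1 (qmono k1)) kv; rewrite ltxx.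
- by move: jk; rewrite k0 leqn0 (negbTE jpos).
- move=> /andP[jv vj] /andP[kv vk].
  case: (ltngtP j k) => [jlt|kj|/val_inj //]; last by move: jk; rewrite leqNgt kj.
  by have := le_lt_trans (le_trans vj (qmono jlt)) kv; rewrite ltxx.
Qed.

Lemma qstrat_spec k v : spred k v -> qstrat F pi v = k.
Proof.
move=> Hk; rewrite /qstrat; case: pickP => [j Hj|H] /=.
  by apply: spred_uniq Hj Hk.
by move: (H k); rewrite /spred in Hk; rewrite Hk.
Qed.

Lemma qstrat_pos v : qstrat F pi v != ord0 -> spred (qstrat F pi v) v.
Proof.
rewrite /qstrat; case: pickP => [j Hj|H] //=; by rewrite eqxx.
Qed.

Lemma ex_seg (m : nat) v : qq 1 < v -> v <= qq m.+1 ->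
  exists j, (0 < j <= m)%N /\ qq j < v /\ v <= qq j.+1.
Proof.
move=> v1; elim: m => [|m IH] vm; first by move: vm v1; lra.
case: (leP v (qq m.+1)) => [vm1|vm1].
  by have [j [/andP[j0 jm] rest]] := IH vm1; exists j; rewrite j0 /= leqW.
by exists m.+1; rewrite /= leqnn.
Qed.

Lemma qstrat0 v : qstrat F pi v = ord0 -> v <= qq 1 \/ qq K.+1 < v.
Proof.
move=> s0; case: (leP v (qq 1)) => [|v1]; first by left.
right; rewrite ltNge; apply/negP => vK.
have [j [/andP[j0 jK] [jv vj]]] := ex_seg v1 vK.
have Hs : spred (Ordinal (n:=K.+1) (m:=j) (jK : (j < K.+1)%N)) v.
  by rewrite spredP /= eqn0Ngt j0 jv vj.
have := qstrat_spec Hs; rewrite s0 => /(congr1 val) /= j00.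
by rewrite -j00 in j0.
Qed.

Lemma fib_pos (k : 'I_K.+1) : k != ord0 ->
  [set v | qstrat F pi v = k] = `]qq k, qq k.+1]%classic.
Proof.
move=> k0; have k0' : (k : nat) != 0%N by [].
apply/seteqP; split => v /=.
  move=> sk; have := qstrat_pos (v := v); rewrite sk => /(_ k0).
  by rewrite spredP (negbTE k0') in_itv /=.
rewrite in_itv /= => kvk; apply: qstrat_spec.
by rewrite spredP (negbTE k0').
Qed.

Lemma fib_measurable (k : 'I_K.+1) : measurable [set v | qstrat F pi v = k].
Proof.
case: (eqVneq k ord0) => [->|k0]; last by rewrite fib_pos //; exact: measurable_itv.
have -> : [set v | qstrat F pi v = ord0] =
  ~` (\bigcup_(j in [set j | j != ord0]) [set v | qstrat F pi v = j]).
  apply/seteqP; split => v /=.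
    by move=> s0 [j /= j0 sj]; rewrite -sj s0 eqxx in j0.
  move=> H; case: (eqVneq (qstrat F pi v) ord0) => // s0; exfalso; apply: H.
  by exists (qstrat F pi v).
apply: measurableC; apply: fin_bigcup_measurable; first exact: finite_finset.
move=> j /= j0.
by rewrite fib_pos //; exact: measurable_itv.
Qed.
End Strat.
Section FinRV.
Local Open Scope ereal_scope.
Context d (T : measurableType d) (R : realType) (P : probability T R).
Variables (U : finType) (Y : T -> U).
Hypothesis mY : forall u, measurable (Y @^-1` [set u]).

Lemma fin_decomp (f : U -> R) w :
  f (Y w) = (\sum_(u : U) f u * \1_(Y @^-1` [set u]) w)%R.
Proof.
rewrite (bigD1 (Y w)) //= indicE mem_set // mulr1 big1 ?addr0 //.
move=> u /negbTE uY; rewrite indicE memNset ?mulr0 //= => Yu.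
by move: uY; rewrite Yu eqxx.
Qed.

Lemma fin_measurable (f : U -> R) : measurable_fun setT (fun w => f (Y w)).
Proof.
rewrite (_ : (fun w => f (Y w)) = (fun w => \sum_(u : U) f u * \1_(Y @^-1` [set u]) w)%R);
  last by apply: funext => w; rewrite fin_decomp.
apply: measurable_sum => u; apply: measurable_realfun.measurable_funM => //.

Qed.

Lemma fin_integral (f : U -> R) :
  \int[P]_w (f (Y w))%:E = \sum_(u : U) (f u)%:E * P (Y @^-1` [set u]).
Proof.
under eq_integral => w _ do rewrite fin_decomp -sumEFin.
rewrite integral_sum //; last first.
  move=> u; under eq_fun do rewrite EFinM.
  apply: integrableZl => //; exact: integrable_indic.
apply: eq_bigr => u _; under eq_integral do rewrite EFinM.
rewrite integralZl //; last exact: integrable_indic.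
by rewrite integral_indic // setIT.
Qed.

Lemma fin_expectation (f : U -> R) :
  'E_P[fun w => f (Y w)] = \sum_(u : U) (f u)%:E * P (Y @^-1` [set u]).
Proof. by rewrite unlock fin_integral. Qed.

Lemma fin_total : \sum_(u : U) P (Y @^-1` [set u]) = 1.
Proof.
have H := fin_integral (fun _ => 1%R).
rewrite integral_cst //= probability_setT mul1e in H.
by rewrite H; apply: eq_bigr => u _; rewrite mul1e.
Qed.
End FinRV.
Section PiFacts.
Variables (R : realType) (K : nat) (pi : 'I_K.+1 -> R).
Hypothesis hpi : in_simplex pi.

Lemma Pi_ge0 j : 0 <= Pi pi j.
Proof. by apply: sumr_ge0 => l _; case: hpi. Qed.

Lemma Pi_mono a b : (a <= b)%N -> Pi pi a <= Pi pi b.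
Proof.
move=> ab; rewrite /Pi [X in _ <= X]big_mkcond [X in X <= _]big_mkcond /=.
apply: ler_sum => l _; case: ifP => la; first by rewrite (leq_trans la ab).
by case: ifP => // _; case: hpi.
Qed.

Lemma Pi_le1 j : Pi pi j <= 1.
Proof.
case: hpi => h0 <-; rewrite /Pi [X in X <= _]big_mkcond /=.
by apply: ler_sum => l _; case: ifP => // _; exact: h0.
Qed.

Lemma Pi_all : Pi pi K.+1 = 1.
Proof. by case: hpi => _ <-; apply: eq_bigl => l; rewrite ltn_ord. Qed.

Lemma Pi_S (k : 'I_K.+1) : Pi pi k.+1 = Pi pi k + pi k.
Proof.
rewrite /Pi (bigD1 k) //= addrC; congr (_ + _); apply: eq_bigl => l.
by rewrite ltnS -(inj_eq val_inj) /= ltn_neqAle andbC.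
Qed.
End PiFacts.

Section OneBidder.
Local Open Scope ereal_scope.
Context d (T : measurableType d) (R : realType) (P : probability T R).
Variables (X : {RV P >-> R}) (K : nat) (pi : 'I_K.+1 -> R).
Hypotheses (h01 : P (X @^-1` `[0%R, 1%R]) = 1) (hc : continuous (cdfR X))
  (hpi : in_simplex pi).
Local Notation F := (cdfR X).

Lemma cdfRE r : (F r)%:E = P (X @^-1` `]-oo, r]).
Proof. by rewrite /cdfR fineK // fin_num_measure. Qed.

Lemma mX (A : set R) : measurable A -> measurable (X @^-1` A).
Proof. exact: measurable_funPTI. Qed.

Lemma mXI (i : interval R) : measurable (X @^-1` [set` i]).
Proof. by apply: mX; exact: measurable_itv. Qed.
Local Hint Resolve mXI : core.

Lemma F_ge0 r : (0 <= F r)%R.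
Proof. by rewrite -lee_fin cdfRE. Qed.

Lemma F1 : F 1 = 1%R.
Proof.
apply/eqP; rewrite -(@eqe R) cdfRE eq_le probability_le1  //=.
rewrite -h01 le_measure ?inE  //.
by move=> w /=; rewrite !in_itv /= => /andP[].
Qed.

Lemma Fneg r : (r < 0)%R -> F r = 0%R.
Proof.
move=> r0; apply/eqP; rewrite -(@eqe R) cdfRE eq_le measure_ge0 andbT.
have -> : ((0%R)%:E : \bar R) = P (~` (X @^-1` `[0%R, 1%R])).
  by rewrite probability_setC  // h01 subee.
rewrite le_measure ?inE  //; first exact: (measurableC (mXI _)).
move=> w /=; rewrite !in_itv /= => wr [] /andP[w0 _].
by have := le_trans w0 wr; rewrite leNgt r0.
Qed.

Lemma F0 : F 0 = 0%R.
Proof.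
apply/eqP; rewrite eq_le F_ge0 andbT leNgt; apply/negP => F0pos.
have Fc0 : F x @[x --> (0%R:R)] --> F 0%R by exact: hc.
have [e e0 He] := (nbhs_ballP _ _).1 (cvgr_gt _ Fc0 _ F0pos).
have e2 : (0 < e / 2)%R by rewrite divr_gt0.
have : (0 < F (- (e / 2)))%R.
  apply: He; rewrite /ball /= sub0r opprK gtr0_norm //.
  by rewrite ltr_pdivrMr // ltr_pMr // ltr1n.
by rewrite Fneg ?ltxx // oppr_lt0.
Qed.

Lemma P_itv a b : (a <= b)%R -> P (X @^-1` `]a, b]) = (F b - F a)%:E.
Proof.
move=> ab; rewrite EFinB !cdfRE.
have -> : X @^-1` `]-oo, b] = X @^-1` `]-oo, a] `|` X @^-1` `]a, b].
  apply/seteqP; split => w /=; rewrite !in_itv /=.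
    by move=> wb; case: (leP (X w) a) => wa; [left|right; apply/andP].
  by case=> [wa|/andP[_ ->//]]; exact: le_trans wa ab.
rewrite measureU  //; last first.
  by apply/seteqP; split => w //= []; rewrite !in_itv /= => wa /andP[]; rewrite ltNge wa.
set A := P (X @^-1` `]-oo, a]); set B := P (X @^-1` `]a, b]).
have -> : (A + B)%R = A + B by [].
by rewrite [A + B]addeC addeK // fin_num_measure.
Qed.

Local Notation qq j := (quantile F (Pi pi j)).

Lemma qq_mono a b : (a <= b)%N -> (qq a <= qq b)%R.
Proof.
move=> ab; apply: quantile_mono; first exact: F1.
  exact: Pi_mono. exact: Pi_le1.
Qed.

Lemma F_qq j : F (qq j) = Pi pi j.
Proof.
apply: quantileK => //; first exact: F0. exact: F1.
by rewrite Pi_ge0 // Pi_le1.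
Qed.

Lemma P_fib (k : 'I_K.+1) :
  P (X @^-1` [set v | qstrat F pi v = k]) = (pi k)%:E.
Proof.
have fibpos : forall j : 'I_K.+1, j != ord0 ->
    P (X @^-1` [set v | qstrat F pi v = j]) = (pi j)%:E.
  move=> j j0; rewrite fib_pos //; last exact: qq_mono.
  rewrite P_itv ?qq_mono // !F_qq Pi_S //; congr EFin; ring.
case: (eqVneq k ord0) => [->|k0]; last exact: fibpos.
have tot := fin_total P (Y := fun w => qstrat F pi (X w))
  (fun u => mX (fib_measurable (@qq_mono) u)).
rewrite (bigD1 ord0) //= in tot.
rewrite (eq_bigr (fun j => (pi j)%:E)) in tot; last by move=> j; exact: fibpos.
rewrite sumEFin in tot.
have : (\sum_(j < K.+1 | j != ord0) pi j + pi ord0 = 1)%R.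
  by case: hpi => _ <-; rewrite [in RHS](bigD1 ord0) //= addrC.
move=> H; rewrite -H in tot.
set A := P ((fun w : T => qstrat F pi (X w)) @^-1` [set ord0]) in tot.
have Afin : A \is a fin_num.
  by rewrite /A fin_num_measure //; exact: (mX (fib_measurable (@qq_mono) ord0)).
have E : (fine A + \sum_(j < K.+1 | j != ord0) pi j = \sum_(j < K.+1 | j != ord0) pi j + pi ord0)%R.
  by apply: EFin_inj; rewrite EFinD fineK //; exact: tot.
have -> : P (X @^-1` [set v | qstrat F pi v = ord0]) = A by [].
by rewrite -(fineK Afin); congr EFin; lra.
Qed.
End OneBidder.
Section OneDim.
Variables (R : realType) (K : nat) (F : R -> R) (pi : 'I_K.+1 -> R) (xs : 'I_K.+1 -> R).
Local Notation qq j := (quantile F (Pi pi j)).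
Hypotheses (qmono : forall a b : nat, (a <= b)%N -> qq a <= qq b) (qq0 : forall j, 0 <= qq j).
Local Notation mu := (@lebesgue_measure R).
Local Notation h := (fun z => xs (qstrat F pi z)).

Definition Jint (t : R) : R := Rintegral mu `[0, t] h.

Lemma h_meas : measurable_fun setT h.
Proof. exact: (fin_measurable (Y := qstrat F pi) (fib_measurable qmono) xs). Qed.

Lemma h_bounded (D : set R) : [bounded h x | x in D].
Proof.
exists (\sum_(k < K.+1) `|xs k|); split; first exact: num_real.
move=> M HM z _ /=; rewrite (le_trans _ (ltW HM)) //.
rewrite (bigD1 (qstrat F pi z)) //= lerDl; exact: sumr_ge0.
Qed.

Lemma h_int (D : set R) : measurable D -> (mu D < +oo)%E -> mu.-integrable D (EFin \o h).
Proof.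
move=> mD Dfin; apply: measurable_bounded_integrable => //.
  exact: measurable_funS h_meas.
exact: h_bounded.
Qed.

Lemma itv_fin (b1 b2 : bool) (a b : R) : (mu [set` Interval (BSide b1 a) (BSide b2 b)] < +oo)%E.
Proof. by rewrite lebesgue_measure_itv; case: ifP => _ //; rewrite -EFinB ltry. Qed.

Lemma Jsplit a b : 0 <= a -> a <= b ->
  Jint b = Jint a + Rintegral mu `]a, b] h.
Proof.
move=> a0 ab; rewrite /Jint.
rewrite (@itv_bndbnd_setU _ _ (BLeft 0) (BRight a) (BRight b)); last 2 first.
  by rewrite bnd_simp. by rewrite bnd_simp.
rewrite Rintegral_setU //.
- rewrite -itv_bndbnd_setU ?bnd_simp //; exact: h_int (measurable_itv _) (itv_fin _ _ _ _).
- apply/disj_setPS => z [] /=; rewrite !in_itv /= => /andP[_ za] /andP[az _].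
  by move: za; rewrite leNgt az.
Qed.

Lemma Rint_cst (a b kap : R) : a <= b ->
  (forall z, a < z <= b -> h z = kap) ->
  Rintegral mu `]a, b] h = kap * (b - a).
Proof.
move=> ab Hz; transitivity (Rintegral mu `]a, b] (fun=> kap)).
  by apply: eq_Rintegral => z; rewrite inE /= in_itv /= => /Hz.
rewrite Rintegral_cst //.
rewrite [X in fine X](_ : _ = (b - a)%:E) //.
apply: eq_trans (lebesgue_measure_itv _) _; rewrite /= lte_fin.
case: ltP => [_|]; first by rewrite EFinB.
move=> ba; have -> : b = a by apply: le_anti; rewrite ba ab.
by rewrite subrr.
Qed.

Lemma J_first t : 0 <= t <= qq 1 -> Jint t = xs ord0 * t.
Proof.
move=> /andP[t0 t1]; rewrite /Jint; transitivity (Rintegral mu `[0, t] (fun=> xs ord0)).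
  apply: eq_Rintegral => z; rewrite inE /= in_itv /= => /andP[_ zt].
  congr xs; apply: (qstrat_spec qmono); rewrite spredP /= (le_trans zt t1) //.
rewrite Rintegral_cst // [X in fine X](_ : _ = t%:E) //.
apply: eq_trans (lebesgue_measure_itv _) _; rewrite /= lte_fin.
case: ltP => [_|]; first by rewrite -EFinB subr0.
move=> tle; have -> : t = 0 by apply: le_anti; rewrite tle t0.
by [].
Qed.

Lemma J_step (k : 'I_K.+1) t : (0 < k)%N -> qq k <= t <= qq k.+1 ->
  Jint t = Jint (qq k) + xs k * (t - qq k).
Proof.
move=> k0 /andP[kt tk]; rewrite (Jsplit (qq0 _) kt); congr (_ + _).
apply: Rint_cst => // z /andP[kz zt]; congr xs; apply: (qstrat_spec qmono).
by rewrite spredP eqn0Ngt k0 /= kz (le_trans zt tk).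
Qed.

Definition xn (j : nat) : R := xs (inord j).
Definition Av (k : nat) : R := \sum_(1 <= j < k.+1) (xn j - xn j.-1) * qq j.

Lemma J_formula (k : nat) t : (k <= K)%N ->
  (if k == 0%N then 0 <= t <= qq 1 else qq k <= t <= qq k.+1) ->
  xn k * t - Jint t = Av k.
Proof.
elim: k t => [|k IH] t kK /=.
  move=> Ht; rewrite J_first // /Av big_geq // /xn.
  have -> : (inord 0 : 'I_K.+1) = ord0 by apply/val_inj; rewrite /= inordK.
  by rewrite subrr.
move=> /andP[kt tk].
have kK' : (k.+1 < K.+1)%N by [].
have := @J_step (Ordinal kK') t isT; rewrite /= kt tk => /(_ isT) ->.
have IHk := IH (qq k.+1) (ltnW kK).
have Hq : (if k == 0%N then 0 <= qq k.+1 <= qq 1 else qq k <= qq k.+1 <= qq k.+1).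
  by case: eqP => [->|_]; rewrite ?qq0 lexx ?andbT // qmono.
have := IHk Hq => E.
rewrite /Av big_nat_recr //= -/(Av k) -E /xn.
have -> : (inord k.+1 : 'I_K.+1) = Ordinal kK' by apply/val_inj; rewrite /= inordK.
ring.
Qed.

Lemma aux_formula t : 0 <= t <= qq K.+1 ->
  xs (qstrat F pi t) * t - Jint t = Av (qstrat F pi t).
Proof.
move=> /andP[t0 tK].
have xE : xs (qstrat F pi t) = xn (qstrat F pi t) by rewrite /xn inord_val.
rewrite xE; apply: J_formula; first by rewrite -ltnS ltn_ord.
case: (eqVneq (qstrat F pi t) ord0) => [s0|s0].
  rewrite s0 /= t0 /=.
  by case: (qstrat0 qmono s0) => // Kt; move: (le_lt_trans tK Kt); rewrite ltxx.
have := qstrat_pos s0; rewrite spredP.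
have -> : ((qstrat F pi t : nat) == 0%N) = false by apply/negbTE.
by move=> /andP[a b]; rewrite (ltW a) b.
Qed.

Lemma J_mono : (forall k, 0 <= xs k) -> {homo Jint : a b / a <= b}.
Proof.
move=> xs0 a b ab.
have hge0 : forall D : set R, 0 <= Rintegral mu D h.
  by move=> D; apply: Rintegral_ge0 => z _.
case: (ltP a 0) => [a0|a0].
  rewrite {1}/Jint set_itv_ge ?Rintegral_set0 //.
  exact: hge0.
  by rewrite bnd_simp -ltNge.
by rewrite (Jsplit a0 ab) lerDl.
Qed.
End OneDim.
Section Alg.
Variables (R : realType) (n K : nat).
Local Notation prof := {ffun 'I_n -> 'I_K.+1}.

Definition setf (c : prof) (i : 'I_n) (k : 'I_K.+1) : prof :=
  [ffun l => if l == i then k else c l].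

Lemma setf_id (c : prof) i : setf c i (c i) = c.
Proof. by apply/ffunP => l; rewrite ffunE; case: eqP => // ->. Qed.

Lemma setfK (c : prof) i k k' : setf (setf c i k) i k' = setf c i k'.
Proof. by apply/ffunP => l; rewrite !ffunE; case: eqP. Qed.

Lemma setf_at (c : prof) i k : setf c i k i = k.
Proof. by rewrite ffunE eqxx. Qed.

Lemma reindex_prof (i : 'I_n) (Th : prof -> 'I_K.+1 -> R) :
  (forall c k k', Th (setf c i k') k = Th c k) ->
  \sum_(c : prof) Th c (c i) = \sum_(c : prof | c i == ord0) \sum_(k < K.+1) Th c k.
Proof.
move=> inv.
rewrite (partition_big (fun c : prof => c i) xpredT) //=.
rewrite [RHS]exchange_big /=; apply: eq_bigr => k _.
rewrite (reindex_onto (fun c => setf c i k) (fun c => setf c i ord0)) /=.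
  apply: eq_big => c.
    rewrite setf_at eqxx /=; apply/eqP/eqP => [<-|c0]; first by rewrite setf_at.
    by rewrite setfK -c0 setf_id.
  by move=> _; rewrite setf_at inv.
by move=> c /eqP ck; rewrite setfK -ck setf_id.
Qed.
End Alg.
Section Alg2.
Variables (R : realType) (n K : nat).

Definition Aval (x : ('I_n -> 'I_K.+1) -> 'I_n -> R) (qf : nat -> R) (i : 'I_n)
  (b : 'I_n -> 'I_K.+1) (k : 'I_K.+1) : R :=
  \sum_(1 <= j < k.+1) (x (upd b i (inord j)) i - x (upd b i (inord j.-1)) i) * qf j.

Lemma dot_e0 (g pi : 'I_K.+1 -> R) :
  grad_dot g pi = g ord0 - \sum_(k < K.+1) pi k * g k.
Proof.
rewrite /grad_dot.
under eq_bigr do rewrite mulrBr.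
rewrite sumrB (bigD1 ord0) //= mulr1 big1 ?addr0; last first.
  by move=> k /negbTE ->; rewrite mulr0.
by congr (_ - _); apply: eq_bigr => k _; rewrite mulrC.
Qed.

Lemma pointwise_id (x p : ('I_n -> 'I_K.+1) -> 'I_n -> R) (F : R -> R)
  (pi : 'I_K.+1 -> R) (i : 'I_n) (b : 'I_n -> 'I_K.+1) :
  p (upd b i ord0) i = 0 -> \sum_(k < K.+1) pi k = 1 ->
  grad_dot (grad x p F pi i b) pi =
  \sum_(k < K.+1) pi k * p (upd b i k) i
  - \sum_(k < K.+1) pi k * Aval x (fun j => quantile F (Pi pi j)) i b k.
Proof.
move=> p0 s1; rewrite dot_e0.
set D := fun j : nat => (x (upd b i (inord j.-1)) i - x (upd b i (inord j)) i)
   * quantile F (Pi pi j).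
set H := fun k : 'I_K.+1 => \sum_(k.+1 <= j < K.+1) D j + x (upd b i ord_max) i.
have gE : forall k, grad x p F pi i b k = H k - p (upd b i k) i by [].
have HA : forall k : 'I_K.+1, H ord0 - H k + Aval x (fun j => quantile F (Pi pi j)) i b k = 0.
  move=> k; rewrite /H /Aval /=.
  rewrite (big_cat_nat (n := k.+1)) //=.
  rewrite [X in _ + X](_ : _ = - \sum_(1 <= j < k.+1) D j).
    by rewrite /=; ring.
  rewrite -sumrN; apply: eq_bigr => j _; rewrite /D; ring.
rewrite gE p0 subr0.
have E1 : \sum_(k < K.+1) pi k * grad x p F pi i b k =
   \sum_(k < K.+1) pi k * H k - \sum_(k < K.+1) pi k * p (upd b i k) i.
  by rewrite -sumrB; apply: eq_bigr => k _; rewrite gE; ring.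
have E2 : \sum_(k < K.+1) pi k * Aval x (fun j => quantile F (Pi pi j)) i b k =
   \sum_(k < K.+1) pi k * H k - \sum_(k < K.+1) pi k * H ord0.
  rewrite -sumrB; apply: eq_bigr => k _.
  have -> : Aval x (fun j => quantile F (Pi pi j)) i b k = H k - H ord0.
    by move: (HA k); lra.
  ring.
have E3 : \sum_(k < K.+1) pi k * H ord0 = H ord0 by rewrite -mulr_suml s1 mul1r.
rewrite E1 E2 E3; ring.
Qed.
End Alg2.
Section Alg3.
Variables (R : realType) (n K : nat).
Local Notation prof := {ffun 'I_n -> 'I_K.+1}.
Variables (x p : ('I_n -> 'I_K.+1) -> 'I_n -> R) (F : 'I_n -> R -> R)
  (pis : 'I_n -> 'I_K.+1 -> R).
Hypothesis VP : forall b i, p (upd b i ord0) i = 0.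
Hypothesis S1 : forall i, \sum_(k < K.+1) pis i k = 1.

Definition wgt (c : prof) : R := \prod_(l < n) pis l (c l).
Definition qf (i : 'I_n) (j : nat) : R := quantile (F i) (Pi (pis i) j).

Lemma upd_eq (b b' : 'I_n -> 'I_K.+1) i j :
  (forall l, l != i -> b l = b' l) -> upd b i j = upd b' i j.
Proof. by move=> E; apply: funext => l; rewrite /upd; case: eqP => // /eqP /E. Qed.

Lemma upd_setf (c : prof) i k j : upd (setf c i k) i j = upd c i j.
Proof. by apply: upd_eq => l /negbTE li; rewrite ffunE li. Qed.

Lemma upd_self (b : 'I_n -> 'I_K.+1) i : upd b i (b i) = b.
Proof. by apply: funext => l; rewrite /upd; case: eqP => // ->. Qed.

Lemma grad_setf (c : prof) i k G pi :
  grad x p G pi i (setf c i k) = grad x p G pi i c.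
Proof. by apply: funext => j; rewrite /grad; under eq_bigr do rewrite !upd_setf; rewrite !upd_setf. Qed.

Lemma Aval_setf (c : prof) i k q j : Aval x q i (setf c i k) j = Aval x q i c j.
Proof. by rewrite /Aval; under eq_bigr do rewrite !upd_setf. Qed.

Lemma wgtE (c : prof) i : wgt c = pis i (c i) * \prod_(l < n | l != i) pis l (c l).
Proof. by rewrite /wgt (bigD1 i). Qed.

Lemma W_setf (c : prof) i k :
  \prod_(l < n | l != i) pis l (setf c i k l) = \prod_(l < n | l != i) pis l (c l).
Proof. by apply: eq_bigr => l /negbTE li; rewrite ffunE li. Qed.

Lemma weighted_id i :
  \sum_(c : prof) wgt c * grad_dot (grad x p (F i) (pis i) i c) (pis i)
  = \sum_(c : prof) wgt c * p c i - \sum_(c : prof) wgt c * Aval x (qf i) i c (c i).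
Proof.
pose W (c : prof) := \prod_(l < n | l != i) pis l (c l).
have T1 : \sum_(c : prof) wgt c * grad_dot (grad x p (F i) (pis i) i c) (pis i)
   = \sum_(c : prof | c i == ord0) W c * grad_dot (grad x p (F i) (pis i) i c) (pis i).
  rewrite (eq_bigr (fun c => (fun c k => pis i k * W c *
        grad_dot (grad x p (F i) (pis i) i c) (pis i)) c (c i))); last first.
    by move=> c _; rewrite (wgtE c i).
  rewrite (reindex_prof (Th := fun c k => pis i k * W c *
        grad_dot (grad x p (F i) (pis i) i c) (pis i))); last first.
    by move=> c k k'; rewrite /W W_setf grad_setf.
  apply: eq_bigr => c _; rewrite -mulr_suml -mulr_suml S1 mul1r //.
have T2 : \sum_(c : prof) wgt c * p c i
   = \sum_(c : prof | c i == ord0) W c * \sum_(k < K.+1) pis i k * p (upd c i k) i.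
  rewrite (eq_bigr (fun c => (fun c k => pis i k * W c * p (upd c i k) i) c (c i)));
    last by move=> c _; rewrite (wgtE c i) upd_self.
  rewrite (reindex_prof (Th := fun c k => pis i k * W c * p (upd c i k) i)); last first.
    by move=> c k k'; rewrite /W W_setf upd_setf.
  apply: eq_bigr => c _; rewrite mulr_sumr; apply: eq_bigr => k _; ring.
have T3 : \sum_(c : prof) wgt c * Aval x (qf i) i c (c i)
   = \sum_(c : prof | c i == ord0) W c * \sum_(k < K.+1) pis i k * Aval x (qf i) i c k.
  rewrite (eq_bigr (fun c => (fun c k => pis i k * W c * Aval x (qf i) i c k) c (c i)));
    last by move=> c _; rewrite (wgtE c i).
  rewrite (reindex_prof (Th := fun c k => pis i k * W c * Aval x (qf i) i c k)); last first.
    by move=> c k k'; rewrite /W W_setf Aval_setf.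
  apply: eq_bigr => c _; rewrite mulr_sumr; apply: eq_bigr => k _; ring.
rewrite T1 T2 T3 -sumrB; apply: eq_bigr => c _.
rewrite pointwise_id ?VP ?S1 // /qf; ring.
Qed.
End Alg3.
Section OneBidder2.
Local Open Scope ereal_scope.
Context d (T : measurableType d) (R : realType) (P : probability T R).
Variables (X : {RV P >-> R}) (K : nat) (pi : 'I_K.+1 -> R).
Hypotheses (h01 : P (X @^-1` `[0%R, 1%R]) = 1) (hc : continuous (cdfR X))
  (hpi : in_simplex pi).
Local Notation F := (cdfR X).
Local Notation qq j := (quantile F (Pi pi j)).
Let mXI (i : interval R) : measurable (X @^-1` [set` i]).
Proof. by apply: mX; exact: measurable_itv. Qed.
Local Hint Resolve mXI : core.

Lemma qq_ge0 j : (0 <= qq j)%R.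
Proof. by have /andP[] := quantile_bounds (F1 h01) (Pi_le1 hpi j). Qed.

Lemma P_neg : P (X @^-1` `]-oo, 0%R[) = 0.
Proof.
apply/eqP; rewrite eq_le measure_ge0 andbT.
have -> : (0 : \bar R) = P (~` (X @^-1` `[0%R, 1%R])).
  by rewrite probability_setC // h01 subee.
rewrite le_measure ?inE //; first exact: (measurableC (mX _ (measurable_itv _))).
move=> w /=; rewrite !in_itv /= => w0 /andP[w0' _].
by move: w0; rewrite ltNge w0'.
Qed.

Lemma P_good : P (X @^-1` `[0%R, qq K.+1]) = 1.
Proof.
have q0 := qq_ge0 K.+1.
have H : X @^-1` `]-oo, qq K.+1] = X @^-1` `]-oo, 0%R[ `|` X @^-1` `[0%R, qq K.+1].
  apply/seteqP; split => w /=; rewrite !in_itv /=.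
    by move=> wq; case: (ltP (X w) 0%R) => w0; [left|right; apply/andP].
  by case=> [w0|/andP[_ ->//]]; exact: le_trans (ltW w0) q0.
have := cdfRE X (qq K.+1); rewrite H measureU //; last first.
  apply/seteqP; split => w //= []; rewrite !in_itv /= => w0 /andP[w0' _].
  by move: w0; rewrite ltNge w0'.
rewrite (F_qq h01 hc hpi) (Pi_all hpi).
move=> E.
have E' : (1 : \bar R) = P (X @^-1` `]-oo, 0%R[) + P (X @^-1` `[0%R, quantile F 1]) := E.
by rewrite P_neg add0e in E'; rewrite E' -(Pi_all hpi).
Qed.
End OneBidder2.
Section Main.
Local Open Scope ereal_scope.
Context d (T : measurableType d) (R : realType) (P : probability T R) (n K : nat)
  (V : 'I_n -> {RV P >-> R}) (x p : ('I_n -> 'I_K.+1) -> 'I_n -> R)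
  (pis : 'I_n -> 'I_K.+1 -> R).
Hypotheses (hx : alloc_ok x) (hvp : voluntary_participation p)
  (hpi : forall i, in_simplex (pis i))
  (hind : mutually_independent P (fun i => (V i : T -> R)))
  (h01 : forall i, P (V i @^-1` `[0%R, 1%R]) = 1)
  (hc : forall i, continuous (cdfR (V i))).
Local Notation prof := {ffun 'I_n -> 'I_K.+1}.
Local Notation s i := (qstrat (cdfR (V i)) (pis i)).
Local Notation qq i j := (quantile (cdfR (V i)) (Pi (pis i) j)).

Definition Yp (w : T) : prof := [ffun l => qstrat (cdfR (V l)) (pis l) (V l w)].

Let qm i := qq_mono (h01 i) (hpi i).

Lemma Yfib (c : prof) :
  Yp @^-1` [set c] = \bigcap_(l in [set: 'I_n]) (V l @^-1` [set v | s l v = c l]).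
Proof.
apply/seteqP; split => w /=.
  by move=> <- l _; rewrite /Yp ffunE.
by move=> H; apply/ffunP => l; rewrite ffunE; exact: H.
Qed.

Lemma mY (c : prof) : measurable (Yp @^-1` [set c]).
Proof.
rewrite Yfib; apply: fin_bigcap_measurable; first exact: finite_finset.
by move=> l _; apply: mX; exact: (fib_measurable (qm l)).
Qed.

Lemma PY (c : prof) : P (Yp @^-1` [set c]) = (wgt pis c)%:E.
Proof.
rewrite Yfib hind; last by move=> l; exact: (fib_measurable (qm l)).
rewrite /wgt -prodEFin; apply: eq_bigr => l _.
exact: (P_fib (h01 l) (@hc l) (hpi l)).
Qed.

Lemma EY (f : prof -> R) :
  'E_P[fun w => f (Yp w)] = (\sum_(c : prof) f c * wgt pis c)%:E.
Proof.
rewrite (fin_expectation P mY) -sumEFin; apply: eq_bigr => c _.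
by rewrite PY EFinM.
Qed.

Lemma bidsY w : (fun l => s l (V l w)) = Yp w.
Proof. by apply: funext => l; rewrite /Yp ffunE. Qed.

Definition Jb (i : 'I_n) (b : 'I_n -> 'I_K.+1) (t : R) : R :=
  Jint (cdfR (V i)) (pis i) (fun k => x (upd b i k) i) t.

Lemma aux_eq w i :
  aux_p x (fun l => s l) (fun l => V l w) i = (x (Yp w) i * V i w - Jb i (Yp w) (V i w))%R.
Proof.
rewrite /aux_p /aux_x bidsY; congr (_ - _)%R.
rewrite /Jb /Jint; apply: eq_Rintegral => z _; congr (x _ i).
apply: funext => l; rewrite /updR /upd /Yp ffunE; by case: eqP => // ->.
Qed.

Lemma aux_ae w : (forall i, 0 <= V i w <= qq i K.+1)%R ->
  (\sum_(i < n) aux_p x (fun l => s l) (fun l => V l w) i =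
   \sum_(i < n) Aval x (qf (fun i => cdfR (V i)) pis i) i (Yp w) (Yp w i))%R.
Proof.
move=> Hw; apply: eq_bigr => i _; rewrite aux_eq.
have E1 : x (Yp w) i = (fun k => x (upd (Yp w) i k) i) (s i (V i w)).
  by rewrite /= -[in LHS](upd_self (Yp w) i) /Yp ffunE.
rewrite E1 /Jb (aux_formula _ (qm i) (qq_ge0 (h01 i) (hpi i)) (Hw i)).
by rewrite /Yp ffunE.
Qed.

Lemma decompG (G : prof -> T -> R) w :
  G (Yp w) w = (\sum_(c : prof) \1_(Yp @^-1` [set c]) w * G c w)%R.
Proof.
rewrite (bigD1 (Yp w)) //= indicE mem_set // mul1r big1 ?addr0 //.
move=> c /negbTE cY; rewrite indicE memNset ?mul0r //= => Yc.
by move: cY; rewrite Yc eqxx.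
Qed.

Lemma aux_meas :
  measurable_fun setT (fun w => \sum_(i < n) aux_p x (fun l => s l) (fun l => V l w) i)%R.
Proof.
apply: measurable_sum => i.
rewrite (_ : (fun w => _) = (fun w => x (Yp w) i * V i w - Jb i (Yp w) (V i w))%R);
  last by apply: funext => w; rewrite aux_eq.
apply: measurable_realfun.measurable_funB.
  apply: measurable_realfun.measurable_funM; last exact: measurable_funPT.
  exact: (fin_measurable mY (fun c : prof => x c i)).
rewrite (_ : (fun w => _) = (fun w => \sum_(c : prof) \1_(Yp @^-1` [set c]) w * Jb i c (V i w))%R);
  last by apply: funext => w; rewrite (decompG (fun c w => Jb i c (V i w))).
apply: measurable_sum => c.
apply: measurable_realfun.measurable_funM; first exact: measurable_realfun.measurable_indic (mY c).
apply: measurableT_comp; last exact: measurable_funPT.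
apply: measurable_realfun.nondecreasing_measurable => //.
apply: (J_mono (qm i)) => k; exact: (hx _).1.
Qed.
End Main.
Section Main2.
Local Open Scope ereal_scope.
Context d (T : measurableType d) (R : realType) (P : probability T R) (n K : nat)
  (V : 'I_n -> {RV P >-> R}) (x p : ('I_n -> 'I_K.+1) -> 'I_n -> R)
  (pis : 'I_n -> 'I_K.+1 -> R).
Hypotheses (hx : alloc_ok x) (hvp : voluntary_participation p)
  (hpi : forall i, in_simplex (pis i))
  (hind : mutually_independent P (fun i => (V i : T -> R)))
  (h01 : forall i, P (V i @^-1` `[0%R, 1%R]) = 1)
  (hc : forall i, continuous (cdfR (V i))).
Local Notation prof := {ffun 'I_n -> 'I_K.+1}.
Local Notation s i := (qstrat (cdfR (V i)) (pis i)).
Local Notation qq i j := (quantile (cdfR (V i)) (Pi (pis i) j)).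
Local Notation Y := (Yp V pis).

Let G := \bigcap_(i in [set: 'I_n]) (V i @^-1` `[0%R, qq i K.+1]).

Let mG : measurable G.
Proof.
apply: fin_bigcap_measurable; first exact: finite_finset.
by move=> i _; apply: mX; exact: measurable_itv.
Qed.

Let PG : P G = 1.
Proof.
rewrite /G hind; last by move=> i; exact: measurable_itv.
rewrite big1 // => i _; exact: (P_good (h01 i) (@hc i) (hpi i)).
Qed.

Lemma Eaux : aux_rev P x (fun i => s i) (fun i => (V i : T -> R)) =
  (\sum_(c : prof) (\sum_(i < n) Aval x (qf (fun i => cdfR (V i)) pis i) i c (c i))%R
      * wgt pis c)%:E.
Proof.
rewrite /aux_rev -(EY hpi hind h01 hc (fun c : prof =>
   \sum_(i < n) Aval x (qf (fun i => cdfR (V i)) pis i) i c (c i))%R).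
rewrite !expectation.unlock; apply: ae_eq_integral => //.
- apply/measurable_realfun.measurable_EFinP. exact: (aux_meas hx hpi h01).
- apply/measurable_realfun.measurable_EFinP.
  exact: (fin_measurable (mY hpi h01) (fun c : prof =>
   \sum_(i < n) Aval x (qf (fun i => cdfR (V i)) pis i) i c (c i))%R).
- exists (~` G); split; first exact: measurableC.
    by have := probability_setC P mG; rewrite PG subee.
  move=> w /= Hn Gw; apply: Hn => _; congr EFin.
  apply: (aux_ae x hpi h01) => i; exact: (Gw i).
Qed.
End Main2.
Section Final.
Local Open Scope ereal_scope.
Context d (T : measurableType d) (R : realType) (P : probability T R) (n K : nat)
  (V : 'I_n -> {RV P >-> R}) (x p : ('I_n -> 'I_K.+1) -> 'I_n -> R)
  (pis : 'I_n -> 'I_K.+1 -> R).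
Hypotheses (hx : alloc_ok x) (hvp : voluntary_participation p)
  (hpi : forall i, in_simplex (pis i))
  (hind : mutually_independent P (fun i => (V i : T -> R)))
  (h01 : forall i, P (V i @^-1` `[0%R, 1%R]) = 1)
  (hc : forall i, continuous (cdfR (V i))).
Local Notation prof := {ffun 'I_n -> 'I_K.+1}.

Lemma ELHS i :
  'E_P[fun w => grad_dot (grad x p (cdfR (V i)) (pis i) i
      (fun l => qstrat (cdfR (V l)) (pis l) (V l w))) (pis i)]
  = (\sum_(c : prof) wgt pis c * grad_dot (grad x p (cdfR (V i)) (pis i) i c) (pis i))%:E.
Proof.
rewrite (_ : (fun w => _) = (fun w => (fun c : prof =>
    grad_dot (grad x p (cdfR (V i)) (pis i) i c) (pis i)) (Yp V pis w))); last first.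
  by apply: funext => w /=; rewrite (bidsY V pis w).
rewrite (EY hpi hind h01 hc (fun c : prof =>
    grad_dot (grad x p (cdfR (V i)) (pis i) i c) (pis i))).
by congr EFin; apply: eq_bigr => c _; exact: mulrC.
Qed.

Lemma ERHS :
  'E_P[fun w => (\sum_(i < n) p (fun l => qstrat (cdfR (V l)) (pis l) (V l w)) i)%R]
  = (\sum_(c : prof) (\sum_(i < n) p c i) * wgt pis c)%:E.
Proof.
rewrite (_ : (fun w => _) = (fun w => (fun c : prof =>
    \sum_(i < n) p c i)%R (Yp V pis w))); last first.
  by apply: funext => w /=; rewrite (bidsY V pis w).
by rewrite (EY hpi hind h01 hc (fun c : prof => \sum_(i < n) p c i)%R).
Qed.

Lemma final_eq :
  (\sum_(i < n)
     'E_P[fun w => grad_dot (grad x p (cdfR (V i)) (pis i) i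
        (fun l => qstrat (cdfR (V l)) (pis l) (V l w))) (pis i)])
  = ('E_P[fun w => (\sum_(i < n) p (fun l => qstrat (cdfR (V l)) (pis l) (V l w)) i)%R]
     - aux_rev P x (fun i => qstrat (cdfR (V i)) (pis i)) (fun i => (V i : T -> R))).
Proof.
under eq_bigr => i _ do rewrite ELHS.
rewrite ERHS (Eaux hx hpi hind h01 hc) sumEFin -EFinB; congr EFin.
have S1 : forall i, (\sum_(k < K.+1) pis i k)%R = 1%R by move=> i; case: (hpi i).
transitivity (\sum_(i < n) (\sum_(c : prof) wgt pis c * p c i
   - \sum_(c : prof) wgt pis c * Aval x (qf (fun j => cdfR (V j)) pis i) i c (c i)))%R.
  by apply: eq_bigr => i _; exact: (weighted_id x (fun j => cdfR (V j)) hvp S1 i).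
rewrite sumrB; congr (_ - _)%R.
  rewrite exchange_big /=; apply: eq_bigr => c _; rewrite mulr_suml.
  by apply: eq_bigr => i _; rewrite mulrC.
rewrite exchange_big /=; apply: eq_bigr => c _; rewrite mulr_suml.
by apply: eq_bigr => i _; rewrite mulrC.
Qed.
End Final.

Unset Implicit Arguments.
Set Strict Implicit.

Theorem mainTheorem8 (d : measure_display) (T : measurableType d) (R : realType)
  (P : probability T R) (n K : nat)
  (V : 'I_n -> {RV P >-> R})
  (x p : ('I_n -> 'I_K.+1) -> 'I_n -> R)
  (pis : 'I_n -> 'I_K.+1 -> R) :
  (0 < K)%N ->
  alloc_ok x -> pay_ok p -> voluntary_participation p ->
  (forall i, in_simplex (pis i)) ->
  mutually_independent P (fun i => (V i : T -> R)) ->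
  (forall i, P (V i @^-1` `[0, 1]) = 1%E) ->
  (forall i, continuous (cdfR (V i) : R -> R)) ->
  let s := fun i => qstrat (cdfR (V i)) (pis i) in
  let bids := fun w l => s l (V l w) in
  (\sum_(i < n)
     'E_P[fun w => grad_dot
                     (grad x p (cdfR (V i)) (pis i) i (bids w)) (pis i)])%E
  = ('E_P[fun w => (\sum_(i < n) p (bids w) i)%R]
     - aux_rev P x s (fun i => (V i : T -> R)))%E.
Proof.
move=> _ hx _ hvp hpi hind h01 hc s bids.
exact: (final_eq hx hvp hpi hind h01 hc).
Qed.
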